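(* There is a universal constant $C_1<\infty$ such that the following holds. In the setting of the context, let $v\in\mathbb{R}^{V_n}$ with $|v_i|\ge1$ for all $i\in V_n$, and let $N$ be the number of inner clusters consisting of a single vertex. Then for every edge configuration $e$ with positive $\mu_{FKSW}$-probability and every $x\in\mathbb{R}$, \[\mu_{FKSW}\Big(\sum_{k=1}^{\ell}\eta_kw_k\in(x-a-1,x-a+1)\ \Big|\ e\Big)\le \frac{C_1}{\sqrt{N+1}},\] where $w_k=\sum_{j\in C_k\cap V_n}S(j)v_j$ and $a=\sum_{k=\ell+1}^{\ell+q}\sum_{j\in C_k\cap V_n}\sigma_jv_j$.
   Context: Let $G=(V,\mathcal{E})$ be a graph, $V_n\subset V$ a set of $n$ vertices, $\mathcal{E}_n=\{\{i,j\}\in\mathcal{E}:i\in V_n\text{ or }j\in V_n\}$, assumed finite, $J_{ij}=J_{ji}\in\mathbb{R}\setminus\{0\}$ for $\{i,j\}\in\mathcal{E}$, and $\kappa\in\{-1,1\}^{V\setminus V_n}$ a boundary condition. Spin configurations $\sigma\in\{-1,1\}^{V_n}$ are extended to $V$ by $\sigma_j=\kappa_j$ for $j\notin V_n$. Let $\mathcal{E}_n^+=\{\{i,j\}\in\mathcal{E}_n:J_{ij}>0\}$, $\mathcal{E}_n^-=\{\{i,j\}\in\mathcal{E}_n:J_{ij}<0\}$, $p_{ij}=1-e^{-|J_{ij}|}$. For $\sigma\in\{-1,1\}^{V_n}$ and $e=(e_{ij})\in\{0,1\}^{\mathcal{E}_n}$ define \[\mu_{FKSW}(\sigma,e)=Z^{-1}\prod_{\{i,j\}\in\mathcal{E}_n^+}\big((1-p_{ij})1_{e_{ij}=0}+p_{ij}1_{e_{ij}=1}1_{\sigma_i=\sigma_j}\big)\prod_{\{i,j\}\in\mathcal{E}_n^-}\big((1-p_{ij})1_{e_{ij}=0}+p_{ij}1_{e_{ij}=1}1_{\sigma_i\ne\sigma_j}\big),\]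 $Z$ the normalizing constant. Let $\overline{V_n}=V_n\cup\{i\in V:\exists j\in V_n,\ \{i,j\}\in\mathcal{E}_n\}$. Clusters are the equivalence classes of $\overline{V_n}$ under the relation ''connected by a path of edges $\{i,j\}$ with $e_{ij}=1$'' (every vertex is equivalent to itself). Clusters contained in $V_n$ are inner clusters, enumerated $C_1,\dots,C_\ell$; the others are boundary clusters $C_{\ell+1},\dots,C_{\ell+q}$. Fix a total order on $V$; let $c_k$ be the smallest vertex of $C_k$ and $\eta_k=\sigma_{c_k}$ (the cluster-spin). For $i\in C_k$, set $S(i)=\eta_k\sigma_i$. *)

(* Defs.v *)
From HB Require Import structures.
From mathcomp Require Import all_boot all_order all_algebra.
From mathcomp Require Import Rstruct.
From Stdlib Require Import Rdefinitions Rtrigo_def.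
Set Implicit Arguments. Unset Strict Implicit. Unset Printing Implicit Defensive.
Import Order.TTheory GRing.Theory Num.Theory.
Local Open Scope ring_scope.

Definition spin (b : bool) : R := if b then 1 else -1.

Section FKSW.
Variables (d : Order.disp_t) (V : orderType d).
Variable adj : rel V.
Variable J : V -> V -> R.
Variable Vn : seq V.
(* a finite "universe" U containing V_n and every neighbour of V_n
   (exists iff E_n is finite); all definitions below are independent of it *)
Variable U : seq V.
(* boundary condition (only its values outside V_n are used) *)
Variable kappa : V -> bool.

Definition UT := seq_sub U.

(* E_n: edges {i,j} with i or j in V_n, oriented by the total order (i < j) *)
Definition edgeb (x : UT * UT) : bool :=
  [&& adj (val x.1) (val x.2), (val x.1 \in Vn) || (val x.2 \in Vn)
    & (val x.1 < val x.2)%O].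

Definition ET := {x : UT * UT | edgeb x}.

Definition VnT := seq_sub Vn.
Definition spinconf := {ffun VnT -> bool}.
Definition edgeconf := {ffun ET -> bool}.

Definition ext (s : spinconf) (j : V) : bool :=
  match @insub V (fun x => x \in Vn) VnT j with Some k => s k | None => kappa j end.

Definition pij (i j : V) : R := 1 - exp (- `|J i j|).

Definition weight (s : spinconf) (e : edgeconf) : R :=
  \prod_(x : ET)
    (let i := val (sval x).1 in let j := val (sval x).2 in
     if 0 < J i j then
       (1 - pij i j) * (~~ e x)%:R + pij i j * (e x)%:R * (ext s i == ext s j)%:R
     else
       (1 - pij i j) * (~~ e x)%:R + pij i j * (e x)%:R * (ext s i != ext s j)%:R).

Definition Zpart : R := \sum_(s : spinconf) \sum_(e : edgeconf) weight s e.

Definition muFKSW (s : spinconf) (e : edgeconf) : R := weight s e / Zpart.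

Definition openb (e : edgeconf) (x y : UT) : bool :=
  [exists z : ET, ((sval z == (x, y)) || (sval z == (y, x))) && e z].

Definition inVbar (x : UT) : bool :=
  (val x \in Vn) || has (fun i => adj i (val x)) Vn.

Definition cluster (e : edgeconf) (x : UT) : {set UT} :=
  [set y | inVbar y && connect (openb e) x y].

Definition inner (e : edgeconf) (x : UT) : bool :=
  inVbar x && (cluster e x \subset [set y | val y \in Vn]).

Definition isrep (e : edgeconf) (x : UT) : bool :=
  [forall y in cluster e x, (val x <= val y)%O].

(* the representatives c_1..c_l of inner clusters, resp. of boundary clusters *)
Definition innerReps (e : edgeconf) : {set UT} :=
  [set x | inner e x && isrep e x].
Definition bdryReps (e : edgeconf) : {set UT} :=
  [set x | [&& inVbar x, ~~ inner e x & isrep e x]].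

Definition Nsingle (e : edgeconf) : nat :=
  #|[set x in innerReps e | #|cluster e x| == 1%N]|.

Definition eta (s : spinconf) (c : UT) : R := spin (ext s (val c)).
Definition Sfun (s : spinconf) (c j : UT) : R := eta s c * spin (ext s (val j)).

Definition wclust (e : edgeconf) (s : spinconf) (v : V -> R) (c : UT) : R :=
  \sum_(j in cluster e c | val j \in Vn) Sfun s c j * v (val j).

Definition sumEtaW (e : edgeconf) (s : spinconf) (v : V -> R) : R :=
  \sum_(c in innerReps e) eta s c * wclust e s v c.

Definition aBdry (e : edgeconf) (s : spinconf) (v : V -> R) : R :=
  \sum_(c in bdryReps e) \sum_(j in cluster e c | val j \in Vn)
     spin (ext s (val j)) * v (val j).

Definition condProb (P : spinconf -> bool) (e : edgeconf) : R :=
  (\sum_(s : spinconf | P s) muFKSW s e) / (\sum_(s : spinconf) muFKSW s e).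

End FKSW.

(* Main.v *)
From HB Require Import structures.
From mathcomp Require Import all_boot all_order all_algebra.
From mathcomp Require Import zify ring lra.
Set Implicit Arguments. Unset Strict Implicit. Unset Printing Implicit Defensive.

Lemma bin_step n k : k.*2 < n -> 'C(n, k) <= 'C(n, k.+1).
Proof.
move=> h; have e := mul_bin_left n k.
rewrite -(leq_pmul2l (ltn0Sn k)) e leq_mul2r; apply/orP; right; lia.
Qed.

Lemma bin_le_mid n k : 'C(n, k) <= 'C(n, n./2).
Proof.
have up : forall m k, k + m = n./2 -> 'C(n, k) <= 'C(n, n./2).
  elim=> [|m IH] k' hk; first by rewrite addn0 in hk; rewrite hk.
  apply: leq_trans (IH k'.+1 _); last by rewrite addSnnS.
  apply: bin_step.
  have := odd_double_half n; lia.
case: (leqP k n./2) => hk.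
  by apply: (up (n./2 - k)); lia.
case: (leqP k n) => hkn; last by rewrite bin_small.
rewrite -bin_sub //; apply: (up (n./2 - (n - k))).
have := odd_double_half n; lia.
Qed.
Lemma central_even m : 'C(m.*2, m) ^ 2 * m.*2.+1 <= 16 ^ m.
Proof.
elim: m => [|m IH]; first by [].
have e1 := mul_bin_down (m.*2.+1) m.
have e2 := mul_bin_diag (m.*2.+2) m.
rewrite /= in e1 e2.
have e3 : m.*2.+1 - m = m.+1 by lia.
rewrite e3 in e1.
have hc' : 'C((m.+1).*2, m.+1) = 'C(m.*2.+1, m).*2.
  rewrite doubleS; apply/eqP; rewrite -(eqn_pmul2l (ltn0Sn m)) -e2; apply/eqP.
  rewrite -!mul2n; ring.
rewrite hc'.
move: e1 IH; set c := 'C(m.*2, m); set o := 'C(m.*2.+1, m) => e1 IH.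
set X := 16 ^ m in IH *.
have h1 : (m.+1)^2 * (o.*2 ^ 2 * (m.+1).*2.+1) = (c ^ 2 * m.*2.+1) * (4 * (m.*2.+1) * (m.*2.+3)).
  have e4 : (m.+1 * o)^2 = (m.*2.+1 * c)^2 by rewrite e1.
  rewrite !expnMn in e4.
  have -> : (m.+1)^2 * (o.*2 ^ 2 * (m.+1).*2.+1) = 4 * (m.+1 ^ 2 * o ^ 2) * (m.*2.+3).
    rewrite -!mul2n !expnMn; ring.
  rewrite e4 -!mul2n; ring.
have h2 : (c ^ 2 * m.*2.+1) * (4 * (m.*2.+1) * (m.*2.+3)) <= X * (4 * (m.*2.+1) * (m.*2.+3)).
  by rewrite leq_mul2r IH orbT.
have h3 : X * (4 * (m.*2.+1) * (m.*2.+3)) <= (m.+1)^2 * (16 ^ m.+1).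
  have -> : (m.+1)^2 * 16^m.+1 = X * (16 * m.+1^2) by rewrite /X (expnS 16); ring.
  have : 4 * (m.*2.+1) * (m.*2.+3) <= 16 * m.+1 ^ 2 by rewrite -!mul2n; nia.
  move=> h.
  by rewrite leq_mul2l h orbT.
have := leq_trans (leq_trans (eq_leq h1) h2) h3.
by rewrite leq_pmul2l ?expn_gt0.
Qed.

Lemma central_bound n : 'C(n, n./2) ^ 2 * n.+1 <= 4 ^ n.
Proof.
have := odd_double_half n.
case: (odd n) => /= hn.
  move: hn; set m := n./2 => hn.
  have e2 := mul_bin_diag (m.*2.+2) m.
  have := central_even m.+1.
  rewrite /= in e2.
  have hc : 'C(m.+1.*2, m.+1) = 'C(n, m).*2.
    apply/eqP; rewrite -(eqn_pmul2l (ltn0Sn m)) doubleS -e2 -hn; apply/eqP.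
    rewrite -!mul2n; ring.
  rewrite hc.
  have hn' : n.+1 = 2 * m.+1 by rewrite -hn; lia.
  have -> : 16 ^ m.+1 = 4 * 4 ^ n by rewrite -expnS hn' expnM.
  move=> h; rewrite -(leq_pmul2l (isT : 0 < 4)); apply: leq_trans h.
  rewrite -hn -!mul2n expnMn. 
  have : m.*2.+2 <= m.*2.+3 by [].
  rewrite -mul2n => hh.
  rewrite (_ : 2^2 = 4) // -mulnA leq_pmul2l // leq_mul2l; apply/orP; right; lia.
move: hn; set m := n./2 => hn.
rewrite -hn /= add0n; have := central_even m.
by rewrite -mul2n expnM.
Qed.
Definition antichain (T : finType) (F : {set {set T}}) :=
  forall A B, A \in F -> B \in F -> A \subset B -> A = B.

Lemma lym (T : finType) n : forall (S : {set T}) (F : {set {set T}}),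
  #|S| = n -> F \subset powerset S -> antichain F ->
  \sum_(A in F) #|A|`! * (n - #|A|)`! <= n`!.
Proof.
elim: n => [|n IH] S F hS hF hA.
  have S0 := cards0_eq hS; subst S.
  rewrite (eq_bigr (fun _ => 1)); last first.
    move=> A HA; have := subsetP hF A HA; rewrite powersetE subset0 => /eqP ->.
    by rewrite cards0.
  rewrite sum_nat_const muln1.
  by have := subset_leq_card hF; rewrite powerset0 cards1.
case: (boolP (S \in F)) => SF.
  have -> : F = [set S].
    apply/setP => A; rewrite inE; apply/idP/eqP => [HA|->//].
    apply: hA => //; by have := subsetP hF A HA; rewrite powersetE.
  by rewrite big_set1 hS subnn muln1.
have Hprop : forall A, A \in F -> exists2 x, x \in S & x \notin A.
  move=> A HA; have sAS : A \subset S by have := subsetP hF A HA; rewrite powersetE.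
  case: (boolP (S \subset A)) => h.
    have : A = S by apply/eqP; rewrite eqEsubset sAS h.
    by move=> e; rewrite -e HA in SF.
  by have [x xS xA] := subsetPn h; exists x.
pose w k := k`! * (n - k)`!.
have step : forall A, A \in F ->
    #|A|`! * (n.+1 - #|A|)`! = \sum_(x in S) (x \notin A) * w #|A|.
  move=> A HA; have sAS : A \subset S by have := subsetP hF A HA; rewrite powersetE.
  have [x xS xA] := Hprop A HA.
  have cA : #|A| <= n.
    have : #|A| < #|S|; last by rewrite hS.
    have := subset_leqif_cards sAS; case => h1 h2.
    rewrite ltn_neqAle h1 andbT h2; apply/negP => /eqP e; subst A.
    by rewrite xS in xA.
  have -> : \sum_(x in S) (x \notin A) * w #|A| = \sum_(x in S :\: A) w #|A|.
    rewrite [RHS]big_mkcond [LHS]big_mkcond /=; apply: eq_bigr => y _.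
    by rewrite !inE; case: (y \in S); case: (y \in A); rewrite /= ?mul1n ?mul0n.
  rewrite sum_nat_const.
  rewrite cardsDS // hS /w (_ : n.+1 - #|A| = (n - #|A|).+1); last by lia.
  rewrite factS; lia.
rewrite (eq_bigr _ step) exchange_big /=.
apply: leq_trans (_ : \sum_(x in S) n`! <= _); last first.
  by rewrite sum_nat_const hS.
apply: leq_sum => x xS.
pose F' := [set A in F | x \notin A].
rewrite (big_setID F') /=.
have -> : \sum_(i in F :\: F') (x \notin i) * w #|i| = 0.
  rewrite big1 // => A; rewrite !inE => /andP [h1 h2]; move: h1.
  by rewrite h2 /= negbK => ->.
rewrite addn0.
have -> : F :&: F' = F'.
  by apply/setP => A; rewrite !inE; case: (A \in F).
rewrite (eq_bigr (fun A : {set T} => w #|A|)); last first.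
  by move=> A; rewrite inE => /andP [_ ->]; rewrite mul1n.
apply: (IH (S :\ x) F').
- by have := cardsD1 x S; rewrite xS hS add1n => -[].
- apply/subsetP => A; rewrite inE powersetE subsetD1 => /andP [HA ->].
  by have := subsetP hF A HA; rewrite powersetE => ->.
- by move=> A B; rewrite !inE => /andP [HA _] /andP [HB _]; apply: hA.
Qed.

Lemma sperner (T : finType) (S : {set T}) (F : {set {set T}}) :
  F \subset powerset S -> antichain F -> #|F| <= 'C(#|S|, #|S|./2).
Proof.
move=> hF hA; set n := #|S|.
have L := lym (erefl n) hF hA.
rewrite -(leq_pmul2r (fact_gt0 n)).
apply: leq_trans (_ : 'C(n, n./2) * (\sum_(A in F) #|A|`! * (n - #|A|)`!) <= _); last first.
  by rewrite leq_mul2l L orbT.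
rewrite -sum_nat_const big_distrr /=; apply: leq_sum => A HA.
have cA : #|A| <= n by apply: subset_leq_card; have := subsetP hF A HA; rewrite powersetE.
rewrite -(bin_fact cA); apply: leq_mul => //; exact: bin_le_mid.
Qed.

Require Import Defs.
From mathcomp Require Import Rstruct.
From Stdlib Require Import Rdefinitions.
Import Order.TTheory GRing.Theory Num.Theory.
Local Open Scope ring_scope.

Section Anti.
Variables (K : realDomainType) (T : finType) (X : {set T}) (b : T -> K) (y : K).
Hypothesis hb : forall t, t \in X -> 1 <= `|b t|.

Lemma aux (a1 b1 z : K) : 2 <= a1 - b1 -> a1 < z + 1 -> z - 1 < b1 -> False.
Proof. move=> *; lra. Qed.

Definition sval' (f : T -> K) (tau : {set T}) := \sum_(t in X) (if t \in tau then - f t else f t).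

Lemma anticonc :
  leq #|[set tau in powerset X | (y - 1 < sval' b tau) && (sval' b tau < y + 1)]| 'C(#|X|, #|X|./2).
Proof.
set F := [set tau in _ | _].
pose Xn := [set t in X | b t < 0].
pose phi (tau : {set T}) := (tau :\: Xn) :|: (Xn :\: tau).
pose c t := `|b t|.
have phiK : involutive phi.
  move=> tau; apply/setP => t; rewrite /phi !inE.
  by case: (t \in tau); case: (t \in X); case: (b t < 0).
have hval : forall tau, sval' b tau = sval' c (phi tau).
  move=> tau; apply: eq_bigr => t tX; rewrite /phi /c !inE tX /=.
  case: (ltrP (b t) 0) => hbt; case: (t \in tau) => /=.
  - by rewrite ltr0_norm.
  - by rewrite ltr0_norm // opprK.
  - by rewrite ger0_norm.
  - by rewrite ger0_norm.
pose G := [set A in powerset X | (y - 1 < sval' c A) && (sval' c A < y + 1)].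
have sub : phi @: F \subset G.
  apply/subsetP => A /imsetP [tau]; rewrite !inE ?powersetE => /andP [tX hI] ->.
  rewrite -hval hI andbT; apply/subsetP => t; rewrite /phi !inE.
  case/orP => /andP [h1 h2]; first exact: (subsetP tX).
  by case/andP: h2.
have ac : antichain G.
  move=> A B; rewrite !inE ?powersetE => /andP [AX /andP [hA1 hA2]] /andP [BX /andP [hB1 hB2]] AB.
  apply/eqP; rewrite eqEsubset AB /=; apply/negP => /negP BA.
  have [t0 t0B t0A] := subsetPn BA.
  have t0X : t0 \in X := subsetP BX t0 t0B.
  have hd : sval' c A - sval' c B >= 2.
    rewrite /sval' -sumrB (bigD1 t0) //= t0B (negbTE t0A).
    have h1 : 1 <= c t0 by apply: hb.
    have h2 : 0 <= \sum_(i in X | i != t0)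
        ((if i \in A then - c i else c i) - (if i \in B then - c i else c i)).
      apply: sumr_ge0 => t _.
      have ct : 0 <= c t by rewrite /c normr_ge0.
      case: (boolP (t \in A)) => tA; first by rewrite (subsetP AB t tA) subrr.
      by case: (t \in B); rewrite ?subrr // opprK addr_ge0.
    rewrite opprK; apply: le_trans (lerD h1 h1) _.
    by rewrite lerDl.
  by have := aux hd hA2 hB1.
have GX : G \subset powerset X by apply/subsetP => A; rewrite inE => /andP [].
rewrite -(card_imset F (inv_inj phiK)).
exact: leq_trans (subset_leq_card sub) (sperner GX ac).
Qed.
End Anti.

Lemma final_aux (A B P2 Cb sq : R) : 0 <= A -> 0 <= B -> 0 < P2 ->
  P2 * A <= Cb * B -> Cb * sq <= P2 -> 0 < sq -> A / B <= 1 / sq.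
Proof.
move=> hA hB hP h1 h2 hs.
have hs' : 0 <= 1 / sq by rewrite divr_ge0 // ltW.
case: (eqVneq B 0) => [->|hB0]; first by rewrite invr0 mulr0.
have hBp : 0 < B by rewrite lt_neqAle eq_sym hB0 hB.
rewrite ler_pdivrMr // mul1r mulrC ler_pdivlMr //.
have h3 : P2 * (A * sq) <= P2 * B.
  have a1 : P2 * A * sq <= Cb * B * sq by rewrite ler_pM2r.
  have a2 : Cb * sq * B <= P2 * B by rewrite ler_pM2r.
  rewrite mulrA; apply: le_trans a1 _; rewrite mulrAC; exact: a2.
by rewrite ler_pM2l in h3.
Qed.

Lemma sqrt_aux (Cb Nn : nat) : leq (muln (expn Cb 2) Nn.+1) (expn 4 Nn) ->
  (Cb%:R : R) * Num.sqrt (Nn%:R + 1) <= (2%:R : R) ^+ Nn.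
Proof.
move=> h.
have e1 : (Cb%:R : R) ^+ 2 * (Nn%:R + 1) = (muln (expn Cb 2) Nn.+1)%:R.
  by rewrite natrM natrX natr1.
have e2 : ((2%:R : R) ^+ Nn) ^+ 2 = (expn 4 Nn)%:R.
  by rewrite natrX -exprM mulnC exprM expr2 -natrM.
have : Num.sqrt ((Cb%:R : R) ^+ 2 * (Nn%:R + 1)) <= Num.sqrt (((2%:R : R) ^+ Nn) ^+ 2).
  by rewrite ler_sqrt ?sqr_ge0 // e1 e2 ler_nat.
rewrite sqrtrM ?sqr_ge0 // !sqrtr_sqr ger0_norm // ger0_norm //.
by rewrite exprn_ge0.
Qed.

Section Main.
Variables (d : Order.disp_t) (V : orderType d) (adj : rel V) (J : V -> V -> R)
  (Vn U : seq V) (kappa : V -> bool).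
Variable e : edgeconf adj Vn U.

Definition cond (z : ET adj Vn U) (s : spinconf Vn) : bool :=
  let i := val (sval z).1 in let j := val (sval z).2 in
  if 0 < J i j then ext kappa s i == ext kappa s j else ext kappa s i != ext kappa s j.

Definition Cons (s : spinconf Vn) : bool := [forall z, e z ==> cond z s].

Definition cst : R := \prod_(z : ET adj Vn U)
  (if e z then pij J (val (sval z).1) (val (sval z).2)
   else 1 - pij J (val (sval z).1) (val (sval z).2)).

Lemma weightE s : weight J kappa s e = (Cons s)%:R * cst.
Proof.
rewrite /weight /cst; case: (boolP (Cons s)) => h.
  rewrite mul1r; apply: eq_bigr => z _.
  have := forallP h z; rewrite /cond /=.
  case: (e z) => /= hc; case: ifP hc => _ hc; rewrite ?hc /=; lra.
have [z hz] : exists z, ~~ (e z ==> cond z s).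
  by apply/existsP; rewrite -negb_forall.
rewrite mul0r (bigD1 z) //=.
move: hz; rewrite /cond /=.
case: (e z) => //=; case: ifP => _ /negbTE -> /=;
  by rewrite ?mulr0n ?mulr1n ?mulr0 ?addr0 ?mul0r.
Qed.

Lemma ratio_cancel (A B k : R) : B * k != 0 -> (A * k) / (B * k) = A / B.
Proof.
rewrite mulf_eq0 negb_or => /andP [hB hk].
by rewrite invfM mulrACA mulfV // mulr1.
Qed.

Lemma sum_muE (P : pred (spinconf Vn)) :
  \sum_(s | P s) muFKSW J kappa s e =
  (\sum_s ((Cons s && P s : bool)%:R : R)) * (cst / Zpart adj J Vn U kappa).
Proof.
rewrite big_distrl /= big_mkcond /=; apply: eq_bigr => s _.
rewrite /muFKSW weightE mulrA.
by case: (P s); rewrite ?andbT ?andbF ?mul0r.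
Qed.

Lemma condProbE (P : pred (spinconf Vn)) :
  0 < \sum_s muFKSW J kappa s e ->
  condProb J kappa P e = (\sum_s ((Cons s && P s : bool)%:R : R)) / (\sum_s ((Cons s)%:R : R)).
Proof.
move=> hpos; rewrite /condProb sum_muE.
have -> : \sum_s muFKSW J kappa s e = \sum_(s | predT s) muFKSW J kappa s e by [].
move: hpos.
have -> : \sum_s muFKSW J kappa s e = \sum_(s | predT s) muFKSW J kappa s e by [].
rewrite !sum_muE => hpos.
have e1 : \sum_s ((Cons s && predT s : bool)%:R : R) = \sum_s ((Cons s)%:R : R).
  by apply: eq_bigr => s _; rewrite andbT.
rewrite e1 in hpos *; apply: ratio_cancel.
by rewrite lt0r_neq0.
Qed.

Hypothesis adj_sym : forall i j, adj i j = adj j i.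

Definition Xs : {set UT U} := [set x in innerReps e | #|cluster e x| == 1%N].

Lemma openb_sym : symmetric (openb e).
Proof. by move=> x y; apply: eq_existsb => z; rewrite orbC. Qed.

Lemma connect_symm x y : connect (openb e) x y = connect (openb e) y x.
Proof. exact: (sym_connect_sym openb_sym). Qed.

Lemma X_in x : x \in Xs -> [/\ inVbar adj Vn x, inner e x, val x \in Vn & cluster e x = [set x]].
Proof.
rewrite !inE => /andP [/andP [hin hrep] hc].
have hV : inVbar adj Vn x by case/andP: hin.
have xc : x \in cluster e x by rewrite inE hV connect0.
have [y hy] := cards1P hc.
have xy : x = y by move: xc; rewrite hy => /set1P.
subst y; split => //.
by case/andP: hin => _ /subsetP /(_ x xc); rewrite inE.
Qed.

Lemma X_uniq c j : inVbar adj Vn c -> j \in cluster e c -> j \in Xs -> c = j.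
Proof.
move=> hc hj hX; have [_ _ _ cj] := X_in hX.
have : c \in cluster e j.
  by move: hj; rewrite !inE hc connect_symm => /andP [_ ->].
by rewrite cj => /set1P.
Qed.

Lemma edge_notX z : e z -> ((sval z).1 \notin Xs) && ((sval z).2 \notin Xs).
Proof.
move=> ez.
have := svalP z; rewrite /edgeb => /and3P [hadj hvn hlt].
set a := (sval z).1 in hadj hvn hlt *; set b := (sval z).2 in hadj hvn hlt *.
have oab : openb e a b.
  apply/existsP; exists z; rewrite ez andbT; apply/orP; left.
  by apply/eqP; apply: surjective_pairing.
have oba : openb e b a by rewrite openb_sym.
have va : inVbar adj Vn a.
  rewrite /inVbar; case/orP: hvn => [-> //| hb]; apply/orP; right.
  by apply/hasP; exists (val b) => //; rewrite adj_sym.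
have vb : inVbar adj Vn b.
  rewrite /inVbar; case/orP: hvn => [ha| -> //]; apply/orP; right.
  by apply/hasP; exists (val a).
apply/andP; split; apply/negP => hX.
- have bc : b \in cluster e a by rewrite inE vb connect1.
  have [_ _ _ ca] := X_in hX; move: bc; rewrite ca => /set1P ba.
  by move: hlt; rewrite ba ltxx.
- have ac : a \in cluster e b by rewrite inE va connect1.
  have [_ _ _ cb] := X_in hX; move: ac; rewrite cb => /set1P ab.
  by move: hlt; rewrite ab ltxx.
Qed.

Definition flip (tau : {set UT U}) (s : spinconf Vn) : spinconf Vn :=
  [ffun k => s k (+) [exists u in tau, val u == val k]].

Lemma flipK tau : involutive (flip tau).
Proof. by move=> s; apply/ffunP => k; rewrite !ffunE addbK. Qed.

Lemma ext_flip (tau : {set UT U}) (s : spinconf Vn) (u : UT U) : tau \subset Xs ->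
  ext kappa (flip tau s) (val u) = ext kappa s (val u) (+) (u \in tau).
Proof.
move=> htau; rewrite /ext; case: insubP => [k kin kv|kn].
  rewrite ffunE; congr (_ (+) _); apply/existsP/idP => [[w /andP [wt /eqP wk]]|ut].
    by have -> : u = w by apply: val_inj; rewrite -kv -wk.
  by exists u; rewrite ut kv eqxx.
case: (boolP (u \in tau)) => ut; last by rewrite addbF.
by have [_ _ hv _] := X_in (subsetP htau u ut); rewrite hv in kn.
Qed.


Lemma notin_tau (tau : {set UT U}) x : tau \subset Xs -> x \notin Xs -> x \notin tau.
Proof. by move=> ht; apply: contra => /(subsetP ht). Qed.

Lemma Cons_flip (tau : {set UT U}) (s : spinconf Vn) : tau \subset Xs -> Cons (flip tau s) = Cons s.
Proof.
move=> ht; apply: eq_forallb => z; case ez: (e z) => //=.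
have /andP [h1 h2] := edge_notX ez.
by rewrite /cond /= !ext_flip // (negbTE (notin_tau ht h1)) (negbTE (notin_tau ht h2)) !addbF.
Qed.

Lemma Xs_inner x : x \in Xs -> x \in innerReps e.
Proof. by rewrite inE => /andP []. Qed.

Lemma notX_cluster c j : inVbar adj Vn c -> c \notin Xs -> j \in cluster e c -> j \notin Xs.
Proof.
move=> hc cX jc; apply/negP => jX.
by have := X_uniq hc jc jX => cj; rewrite cj jX in cX.
Qed.

Variable v : V -> R.

Definition Gr (s : spinconf Vn) : R :=
  \sum_(c in innerReps e | c \notin Xs) Defs.eta kappa s c * wclust kappa e s v c
  + aBdry kappa e s v.

Lemma spin_sq b : spin b * spin b = 1.
Proof. by case: b; rewrite /spin ?mulr1 ?mulrNN ?mulr1. Qed.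

Lemma spin_neg b : spin (~~ b) = - spin b.
Proof. by case: b; rewrite /spin ?opprK. Qed.

Lemma Fv_dec s : sumEtaW kappa e s v + aBdry kappa e s v =
  Gr s + \sum_(c in Xs) spin (ext kappa s (val c)) * v (val c).
Proof.
rewrite /sumEtaW /Gr (bigID (fun c => c \in Xs)) /=.
have -> : \sum_(c in innerReps e | c \in Xs) Defs.eta kappa s c * wclust kappa e s v c =
    \sum_(c in Xs) spin (ext kappa s (val c)) * v (val c).
  rewrite (eq_bigl (fun c => c \in Xs)); last first.
    by move=> c; apply/andP/idP => [[]//|h]; split => //; exact: Xs_inner.
  apply: eq_bigr => c cX; have [_ _ hvc cc] := X_in cX.
  rewrite /wclust cc (big_pred1 c); last first.
    by move=> j; rewrite inE /=; case: eqP => [->|]; rewrite ?hvc.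
  by rewrite /Sfun /Defs.eta !mulrA spin_sq mul1r.
by rewrite [X in X + _]addrC addrAC.
Qed.

Lemma Gr_flip (tau : {set UT U}) (s : spinconf Vn) : tau \subset Xs -> Gr (flip tau s) = Gr s.
Proof.
move=> ht; rewrite /Gr; congr (_ + _).
  apply: eq_bigr => c /andP [cin cX].
  have hc : inVbar adj Vn c by move: cin; rewrite inE => /andP [/andP [] ].
  rewrite /Defs.eta ext_flip // (negbTE (notin_tau ht cX)) addbF; congr (_ * _).
  apply: eq_bigr => j /andP [jc _].
  by rewrite /Sfun /Defs.eta !ext_flip // (negbTE (notin_tau ht cX))
    (negbTE (notin_tau ht (notX_cluster hc cX jc))) !addbF.
apply: eq_bigr => c cb.
have hc : inVbar adj Vn c by move: cb; rewrite inE => /andP [].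
have cX : c \notin Xs.
  apply/negP => /Xs_inner; move: cb; rewrite !inE => /and3P [_ hni _] /andP [hi _].
  by rewrite hi in hni.
apply: eq_bigr => j /andP [jc _].
by rewrite !ext_flip // (negbTE (notin_tau ht (notX_cluster hc cX jc))) !addbF.
Qed.


Hypothesis hv : forall i, i \in Vn -> 1 <= `|v i|.
Variable x : R.

Definition Pev (s : spinconf Vn) : bool :=
  (x - aBdry kappa e s v - 1 < sumEtaW kappa e s v)
  && (sumEtaW kappa e s v < x - aBdry kappa e s v + 1).

Lemma ev_aux (S a G W : R) : S + a = G + W ->
  ((x - a - 1 < S) && (S < x - a + 1)) = ((x - G - 1 < W) && (W < x - G + 1)).
Proof. move=> h; apply/andP/andP => -[h1 h2]; split; lra. Qed.

Definition bvec (s : spinconf Vn) (c : UT U) : R := spin (ext kappa s (val c)) * v (val c).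

Lemma Pev_flip (tau : {set UT U}) (s : spinconf Vn) : tau \subset Xs ->
  Pev (flip tau s) = (x - Gr s - 1 < sval' Xs (bvec s) tau) && (sval' Xs (bvec s) tau < x - Gr s + 1).
Proof.
move=> ht; rewrite /Pev; apply: ev_aux.
rewrite Fv_dec Gr_flip //; congr (_ + _).
apply: eq_bigr => c cX; rewrite ext_flip // /bvec.
by case: (c \in tau); rewrite ?addbT ?addbF ?spin_neg ?mulNr.
Qed.

Lemma count_s (s : spinconf Vn) :
  leq (\big[addn/0%N]_(tau in powerset Xs) nat_of_bool (Cons (flip tau s) && Pev (flip tau s)))
    (muln (nat_of_bool (Cons s)) 'C(#|Xs|, #|Xs|./2)).
Proof.
rewrite (eq_bigr (fun tau => nat_of_bool (Cons s && ((x - Gr s - 1 < sval' Xs (bvec s) tau) && (sval' Xs (bvec s) tau < x - Gr s + 1))))); last first.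
  by move=> tau; rewrite powersetE => ht; rewrite Cons_flip // Pev_flip.
case: (Cons s); last by rewrite big1.
rewrite mul1n.
set Q := fun tau => (x - Gr s - 1 < sval' Xs (bvec s) tau) && (sval' Xs (bvec s) tau < x - Gr s + 1).
have -> : \big[addn/0%N]_(tau in powerset Xs) nat_of_bool (true && Q tau) = #|[set tau in powerset Xs | Q tau]|.
  rewrite -sum1_card big_mkcond [RHS]big_mkcond /=; apply: eq_bigr => tau _.
  by rewrite !inE; case: (tau \subset Xs); case: (Q tau).
apply: anticonc => c cX.
have [_ _ hvc _] := X_in cX.
rewrite /bvec normrM (_ : `|spin _| = 1) ?mul1r; first exact: hv.
by case: (ext _ _ _); rewrite /spin ?normrN normr1.
Qed.

Lemma main_count :
  leq (muln (expn 2 #|Xs|) (\big[addn/0%N]_s nat_of_bool (Cons s && Pev s)))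
    (muln 'C(#|Xs|, #|Xs|./2) (\big[addn/0%N]_s nat_of_bool (Cons s))).
Proof.
rewrite -card_powerset -sum_nat_const.
rewrite (eq_bigr (fun tau => \big[addn/0%N]_s nat_of_bool (Cons (flip tau s) && Pev (flip tau s)))); last first.
  by move=> tau _; apply: (reindex_inj (inv_inj (flipK tau))).
rewrite exchange_big /= big_distrr /=; apply: leq_sum => s _.
by rewrite mulnC count_s.
Qed.


Lemma final_sec : 0 < \sum_s muFKSW J kappa s e ->
  condProb J kappa Pev e <= 1 / Num.sqrt ((Nsingle e)%:R + 1).
Proof.
move=> hpos; rewrite condProbE //.
have hN : Nsingle e = #|Xs| by [].
rewrite hN.
have mc := main_count.
set N := #|Xs| in mc *.
set Cb := 'C(N, N./2) in mc.
apply: (@final_aux _ _ ((2%:R : R) ^+ N) (Cb%:R)).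
- by apply: sumr_ge0 => s _; rewrite ler0n.
- by apply: sumr_ge0 => s _; rewrite ler0n.
- by rewrite exprn_gt0.
- have : ((muln (expn 2 N) (\big[addn/0%N]_s nat_of_bool (Cons s && Pev s)))%:R : R) <=
      (muln Cb (\big[addn/0%N]_s nat_of_bool (Cons s)))%:R by rewrite ler_nat.
  by rewrite !natrM natrX !natr_sum.
- exact: sqrt_aux (central_bound N).
- by rewrite sqrtr_gt0 ltr_wpDl.
Qed.

End Main.

Theorem mainTheorem5 :
  exists C1 : R, forall (d : Order.disp_t) (V : orderType d) (adj : rel V)
    (J : V -> V -> R) (Vn U : seq V) (kappa : V -> bool) (v : V -> R),
    (forall i j, adj i j = adj j i) ->
    (forall i, ~~ adj i i) ->
    (forall i j, J i j = J j i) ->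
    (forall i j, adj i j -> J i j != 0) ->
    uniq Vn ->
    {subset Vn <= U} ->
    (forall i j, i \in Vn -> adj i j -> j \in U) ->
    (forall i, i \in Vn -> 1 <= `|v i|) ->
    forall (e : edgeconf adj Vn U) (x : R),
      0 < \sum_(s : spinconf Vn) muFKSW J kappa s e ->
      condProb J kappa
        (fun s => (x - aBdry kappa e s v - 1 < sumEtaW kappa e s v)
               && (sumEtaW kappa e s v < x - aBdry kappa e s v + 1)) e
      <= C1 / Num.sqrt ((Nsingle e)%:R + 1).
Proof.
Proof.
exists 1 => d V adj J Vn U kappa v hsym _ _ _ _ _ _ hv e x hpos.
exact: (final_sec hsym hv x hpos).
Qed.
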